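(* Let $\delta>0$ and $E\in\mathcal T_\delta$. Then there are constants $0<C_1<C_2$ such that for all $0<\epsilon<\delta$, $$\frac{C_1}{|m^+(E+i\epsilon)|}<\frac{\|\boldsymbol u_1\|_{L_\epsilon}}{\|\boldsymbol u_2\|_{L_\epsilon}}<\frac{C_2}{|m^+(E+i\epsilon)|}.$$
   Context: $J=\begin{pmatrix}1&0\\0&0\end{pmatrix}$, $V:\mathbb Z\to M(2,\mathbb C)$ bounded with self-adjoint values $V(n)=(V_{ij}(n))$, and $(\mathcal S\boldsymbol u)(n)=J\boldsymbol u(n+1)+J\boldsymbol u(n-1)+V(n)\boldsymbol u(n)$ on $\ell^2(\mathbb Z,\mathbb C^2)$; write $\boldsymbol u(n)=(a(n),b(n))^{\mathsf T}$. $\mathcal T_\delta=\{x\in\mathbb R:\operatorname{dist}(x,\{V_{22}(n):n\in\mathbb Z\})\ge\delta\}$. For $\operatorname{Im}z>0$ let $\boldsymbol u_z^+$ be the (unique up to scaling) nonzero solution of $\mathcal S\boldsymbol u=z\boldsymbol u$ with $\sum_{n\ge0}\|\boldsymbol u_z^+(n)\|^2<\infty$ and put $m^+(z)=-a_z^+(1)/a_z^+(0)$. For $E\in\mathcal T_\delta$, let $\boldsymbol u_1,\boldsymbol u_2$ be the solutions of $\mathcal S\boldsymbol u=E\boldsymbol u$ with $a_1(1)=1,a_1(0)=0$, $a_2(1)=0,a_2(0)=1$ (for such $E$ every solution satisfies $b(n)=\frac{V_{21}(n)}{E-V_{22}(n)}a(n)$). For $L>1$, $\|\boldsymbol u\|_L=\big(\sum_{n=1}^{\lfloor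 L\rfloor}\|\boldsymbol u(n)\|^2+(L-\lfloor L\rfloor)\|\boldsymbol u(\lfloor L\rfloor+1)\|^2\big)^{1/2}$, and for $\epsilon>0$, $L_\epsilon\in(1,\infty)$ is the unique $L$ with $\|\boldsymbol u_1\|_L\|\boldsymbol u_2\|_L=\frac1{4\epsilon}$. *)

(* Defs.v *)
From Stdlib Require Import Reals ZArith.
From Coquelicot Require Import Coquelicot.
Open Scope R_scope.

Record M2 := mkM2 { m11 : C; m12 : C; m21 : C; m22 : C }.

Definition selfadjoint (A : M2) : Prop :=
  m11 A = Cconj (m11 A) /\ m22 A = Cconj (m22 A) /\ m21 A = Cconj (m12 A).

Definition bounded_pot (V : Z -> M2) : Prop :=
  exists K : R, forall n : Z,
    Cmod (m11 (V n)) <= K /\ Cmod (m12 (V n)) <= K /\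
    Cmod (m21 (V n)) <= K /\ Cmod (m22 (V n)) <= K.

Definition admissible_pot (V : Z -> M2) : Prop :=
  bounded_pot V /\ forall n, selfadjoint (V n).

(* u(n) = (a(n), b(n)).  (S u)(n) = J u(n+1) + J u(n-1) + V(n) u(n),
   J = diag(1,0).  S u = z u, componentwise, as a formal equation on Z. *)
Definition is_solution (V : Z -> M2) (z : C) (u : Z -> C * C) : Prop :=
  forall n : Z,
    Cplus (Cplus (fst (u (n + 1)%Z)) (fst (u (n - 1)%Z)))
          (Cplus (Cmult (m11 (V n)) (fst (u n))) (Cmult (m12 (V n)) (snd (u n))))
      = Cmult z (fst (u n)) /\
    Cplus (Cmult (m21 (V n)) (fst (u n))) (Cmult (m22 (V n)) (snd (u n)))
      = Cmult z (snd (u n)).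

Definition sqnorm (v : C * C) : R := (Cmod (fst v))^2 + (Cmod (snd v))^2.

Definition nonzero_seq (u : Z -> C * C) : Prop := exists n, u n <> (RtoC 0, RtoC 0).

Definition l2_at_plus_infty (u : Z -> C * C) : Prop :=
  ex_series (fun k : nat => sqnorm (u (Z.of_nat k))).

Definition is_mplus (V : Z -> M2) (z : C) (m : C) : Prop :=
  exists u : Z -> C * C,
    is_solution V z u /\ nonzero_seq u /\ l2_at_plus_infty u /\
    m = Copp (Cdiv (fst (u 1%Z)) (fst (u 0%Z))).

(* E in T_delta: dist(E, {V22(n)}) >= delta (V22 is real-valued). *)
Definition in_T (V : Z -> M2) (delta E : R) : Prop :=
  forall n : Z, delta <= Rabs (E - Re (m22 (V n))).

Fixpoint partial_sq (u : Z -> C * C) (N : nat) : R :=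
  match N with
  | O => 0
  | S k => partial_sq u k + sqnorm (u (Z.of_nat (S k)))
  end.

Definition nfloor (L : R) : nat := Z.to_nat (Int_part L).

Definition normL (u : Z -> C * C) (L : R) : R :=
  sqrt (partial_sq u (nfloor L)
        + (L - INR (nfloor L)) * sqnorm (u (Z.of_nat (S (nfloor L))))).

(* Main.v *)
Require Import Defs.
From Stdlib Require Import Reals ZArith Lia Lra Psatz.
From Coquelicot Require Import Coquelicot.
Open Scope R_scope.

Fixpoint rsum1 (f : nat -> R) (N : nat) : R :=
  match N with O => 0 | S k => rsum1 f k + f (S k) end.

Lemma partial_sq_rsum u N :
  partial_sq u N = rsum1 (fun k => sqnorm (u (Z.of_nat k))) N.
Proof. induction N; simpl; [reflexivity| rewrite IHN; reflexivity]. Qed.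

Lemma rsum1_le f g N : (forall j, (1 <= j <= N)%nat -> f j <= g j) ->
  rsum1 f N <= rsum1 g N.
Proof.
  induction N; intros H; simpl; [lra|].
  assert (rsum1 f N <= rsum1 g N) by (apply IHN; intros; apply H; lia).
  assert (f (S N) <= g (S N)) by (apply H; lia). lra.
Qed.

Lemma rsum1_nonneg f N : (forall j, 0 <= f j) -> 0 <= rsum1 f N.
Proof. intros H; induction N; simpl; [lra| specialize (H (S N)); lra]. Qed.

Lemma rsum1_mono f N M : (forall j, 0 <= f j) -> (N <= M)%nat -> rsum1 f N <= rsum1 f M.
Proof.
  intros H HNM; induction HNM; [lra|]. simpl. specialize (H (S m)); lra.
Qed.

Lemma rsum1_term f N j : (forall j, 0 <= f j) -> (1 <= j <= N)%nat -> f j <= rsum1 f N.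
Proof.
  intros H Hj. destruct j; [lia|].
  apply Rle_trans with (rsum1 f (S j)).
  - simpl. pose proof (rsum1_nonneg f j H). lra.
  - apply rsum1_mono; auto; lia.
Qed.

Lemma rsum1_lin3 g1 g2 g3 c1 c2 c3 N :
  rsum1 (fun j => c1 * g1 j + c2 * g2 j + c3 * g3 j) N =
  c1 * rsum1 g1 N + c2 * rsum1 g2 N + c3 * rsum1 g3 N.
Proof. induction N; simpl; [ring| rewrite IHN; ring]. Qed.

Lemma sq_le_le x y : 0 <= y -> x ^ 2 <= y ^ 2 -> x <= y.
Proof. intros. nra. Qed.

Lemma rsum1_CS x y N : (forall j, 0 <= x j) -> (forall j, 0 <= y j) ->
  rsum1 (fun j => x j * y j) N <=
  sqrt (rsum1 (fun j => x j ^ 2) N) * sqrt (rsum1 (fun j => y j ^ 2) N).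
Proof.
  intros Hx Hy. induction N; cbn [rsum1].
  - rewrite sqrt_0; lra.
  - set (A := rsum1 (fun j => x j ^ 2) N) in *.
    set (B := rsum1 (fun j => y j ^ 2) N) in *.
    assert (HA : 0 <= A) by (apply rsum1_nonneg; intros; apply pow2_ge_0).
    assert (HB : 0 <= B) by (apply rsum1_nonneg; intros; apply pow2_ge_0).
    set (a := sqrt A) in *. set (b := sqrt B) in *.
    assert (Ha : 0 <= a) by apply sqrt_pos. assert (Hb : 0 <= b) by apply sqrt_pos.
    assert (Ha2 : a * a = A) by (apply sqrt_sqrt; auto).
    assert (Hb2 : b * b = B) by (apply sqrt_sqrt; auto).
    set (x0 := x (S N)). set (y0 := y (S N)).
    assert (0 <= x0) by apply Hx. assert (0 <= y0) by apply Hy.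
    assert (Hs : 0 <= A + x0^2) by nra. assert (Ht : 0 <= B + y0^2) by nra.
    pose proof (sqrt_sqrt _ Hs). pose proof (sqrt_sqrt _ Ht).
    pose proof (sqrt_pos (A + x0^2)). pose proof (sqrt_pos (B + y0^2)).
    set (s := sqrt (A + x0^2)) in *. set (t := sqrt (B + y0^2)) in *.
    assert (a * b + x0 * y0 <= s * t).
    { apply sq_le_le; [nra|].
      assert ((s*t)^2 = (A + x0^2) * (B + y0^2)) by (simpl; nra).
      rewrite H5. rewrite <- Ha2, <- Hb2. pose proof (pow2_ge_0 (a*y0 - b*x0)). nra. }
    lra.
Qed.

Definition Tg (u : Z -> C * C) (n : Z) : R :=
  snd (Cmult (Cconj (fst (u n))) (fst (u (n+1)%Z))).

Lemma Cmod_sq x : Cmod x ^ 2 = fst x ^ 2 + snd x ^ 2.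
Proof. unfold Cmod. rewrite pow2_sqrt; [reflexivity|]. nra. Qed.

Lemma sqnorm_comp v : sqnorm v =
  fst (fst v) ^ 2 + snd (fst v) ^ 2 + fst (snd v) ^ 2 + snd (snd v) ^ 2.
Proof. unfold sqnorm. rewrite !Cmod_sq. ring. Qed.

Lemma green_step V E eps u : (forall n, selfadjoint (V n)) ->
  is_solution V (E, eps) u -> forall n, Tg u n - Tg u (n-1) = eps * sqnorm (u n).
Proof.
  intros HS Hsol n. destruct (Hsol n) as [e1 e2]. destruct (HS n) as [s11 [s22 s21]].
  unfold Tg. replace (n-1+1)%Z with n by lia. rewrite sqnorm_comp.
  destruct (V n) as [v11 v12 v21 v22]; simpl in *.
  destruct (u n) as [[x0 y0] [p q]], (u (n+1)%Z) as [[x1 y1] c1], (u (n-1)%Z) as [[x2 y2] c2].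
  destruct v11 as [r11 i11], v12 as [r12 i12], v21 as [r21 i21], v22 as [r22 i22].
  unfold Cconj, Cplus, Cmult in *; simpl in *.
  injection e1 as e1r e1i. injection e2 as e2r e2i.
  injection s11 as s11. injection s22 as s22. injection s21 as s21a s21b.
  assert (i11 = 0) by lra. assert (i22 = 0) by lra. subst.
  pose proof (f_equal (fun r => x0 * r) e1i). pose proof (f_equal (fun r => y0 * r) e1r).
  pose proof (f_equal (fun r => p * r) e2i). pose proof (f_equal (fun r => q * r) e2r).
  simpl in *. lra.
Qed.

Lemma green_sum V E eps u : (forall n, selfadjoint (V n)) ->
  is_solution V (E, eps) u -> forall N,
  eps * rsum1 (fun k => sqnorm (u (Z.of_nat k))) N = Tg u (Z.of_nat N) - Tg u 0.
Proof.
  intros HS Hs N. induction N; cbn [rsum1].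
  - simpl. ring.
  - rewrite Rmult_plus_distr_l, IHN.
    pose proof (green_step V E eps u HS Hs (Z.of_nat (S N))) as G.
    replace (Z.of_nat (S N) - 1)%Z with (Z.of_nat N) in G by lia. lra.
Qed.

Lemma eps_le x y : (forall eta, 0 < eta -> x <= y + eta) -> x <= y.
Proof.
  intros H. destruct (Rle_dec x y); auto.
  specialize (H ((x - y)/2)). lra.
Qed.

Lemma green_ineq V E eps u : 0 <= eps -> (forall n, selfadjoint (V n)) ->
  is_solution V (E, eps) u -> l2_at_plus_infty u -> forall M,
  eps * rsum1 (fun k => sqnorm (u (Z.of_nat k))) M <= - Tg u 0.
Proof.
  intros Heps HS Hs Hl M. apply eps_le. intros eta Heta.
  pose proof (ex_series_lim_0 _ Hl) as Hlim.
  apply is_lim_seq_spec in Hlim. destruct (Hlim (mkposreal eta Heta)) as [N0 HN0].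
  simpl in HN0.
  set (N := max N0 M).
  assert (HsN := green_sum V E eps u HS Hs N).
  set (s := fun k : nat => sqnorm (u (Z.of_nat k))) in *.
  assert (Hmono : eps * rsum1 s M <= eps * rsum1 s N).
  { apply Rmult_le_compat_l; [lra|]. apply rsum1_mono; [intros; apply Rplus_le_le_0_compat; apply pow2_ge_0| unfold N; lia]. }
  assert (HT : Rabs (Tg u (Z.of_nat N)) <= (s N + s (S N)) / 2).
  { unfold Tg, s. rewrite !sqnorm_comp. replace (Z.of_nat N + 1)%Z with (Z.of_nat (S N)) by lia.
    destruct (u (Z.of_nat N)) as [[x0 y0] [p q]], (u (Z.of_nat (S N))) as [[x1 y1] [p1 q1]].
    simpl. pose proof (pow2_ge_0 (x0 - y1)). pose proof (pow2_ge_0 (x0 + y1)).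
    pose proof (pow2_ge_0 (y0 - x1)). pose proof (pow2_ge_0 (y0 + x1)).
    pose proof (pow2_ge_0 p). pose proof (pow2_ge_0 q). pose proof (pow2_ge_0 p1). pose proof (pow2_ge_0 q1).
    apply Rabs_le. split; nra. }
  assert (s N < eta). { specialize (HN0 N ltac:(unfold N; lia)). rewrite Rminus_0_r in HN0.
    apply Rle_lt_trans with (2 := HN0). apply Rle_abs. }
  assert (s (S N) < eta). { specialize (HN0 (S N) ltac:(unfold N; lia)). rewrite Rminus_0_r in HN0.
    apply Rle_lt_trans with (2 := HN0). apply Rle_abs. }
  pose proof (Rle_abs (Tg u (Z.of_nat N))). lra.
Qed.

Lemma sqnorm_nonneg v : 0 <= sqnorm v.
Proof. unfold sqnorm. pose proof (pow2_ge_0 (Cmod (fst v))). pose proof (pow2_ge_0 (Cmod (snd v))). lra. Qed.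

Lemma sqnorm_zero v : sqnorm v = 0 -> v = (RtoC 0, RtoC 0).
Proof.
  rewrite sqnorm_comp. destruct v as [[a b] [c d]]; simpl. intros H.
  pose proof (pow2_ge_0 a). pose proof (pow2_ge_0 b). pose proof (pow2_ge_0 c). pose proof (pow2_ge_0 d).
  assert (a = 0) by nra. assert (b = 0) by nra. assert (c = 0) by nra. assert (d = 0) by nra.
  subst. reflexivity.
Qed.

Lemma b_zero A E eps a b : selfadjoint A -> 0 < eps ->
  Cplus (Cmult (m21 A) a) (Cmult (m22 A) b) = Cmult (E, eps) b -> a = RtoC 0 -> b = RtoC 0.
Proof.
  intros [_ [s22 _]] He e2 Ha. subst a. destruct A as [v11 v12 v21 v22]; simpl in *.
  destruct v22 as [r i], v21 as [r1 i1], b as [p q]. unfold Cconj, Cplus, Cmult, RtoC in *; simpl in *.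
  injection s22 as s22. injection e2 as e2r e2i. assert (i = 0) by lra. subst.
  pose proof (f_equal (fun t => q * t) e2r). pose proof (f_equal (fun t => p * t) e2i).
  simpl in *. assert (eps * (p^2 + q^2) = 0) by nra.
  pose proof (pow2_ge_0 p). pose proof (pow2_ge_0 q).
  assert (p^2 + q^2 = 0) by nra.
  assert (p = 0) by nra. assert (q = 0) by nra. subst. reflexivity.
Qed.

Lemma nondeg V E eps u : (forall n, selfadjoint (V n)) -> 0 < eps ->
  is_solution V (E, eps) u -> nonzero_seq u -> l2_at_plus_infty u -> fst (u 0%Z) <> RtoC 0.
Proof.
  intros HS He Hs Hnz Hl H0.
  assert (T0 : Tg u 0 = 0).
  { unfold Tg. rewrite H0. unfold Cconj, Cmult, RtoC. simpl. ring. }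
  assert (Hpos : forall j, (1 <= j)%nat -> u (Z.of_nat j) = (RtoC 0, RtoC 0)).
  { intros j Hj. apply sqnorm_zero. apply Rle_antisym; [|apply sqnorm_nonneg].
    pose proof (green_ineq V E eps u ltac:(lra) HS Hs Hl j) as G. rewrite T0 in G.
    pose proof (rsum1_term (fun k => sqnorm (u (Z.of_nat k))) j j
      (fun k => sqnorm_nonneg _) ltac:(lia)). simpl in H. nra. }
  assert (Hneg : forall k, fst (u (- Z.of_nat k)%Z) = RtoC 0 /\ fst (u (1 - Z.of_nat k)%Z) = RtoC 0).
  { induction k.
    - pose proof (Hpos 1%nat ltac:(lia)) as H1. simpl in *. split; [exact H0|]. rewrite H1. reflexivity.
    - destruct IHk as [h1 h2]. split;
        [| replace (1 - Z.of_nat (S k))%Z with (- Z.of_nat k)%Z by lia; exact h1].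
      destruct (Hs (- Z.of_nat k)%Z) as [e1 e2].
      assert (hb := b_zero _ _ _ _ _ (HS _) He e2 h1).
      replace (- Z.of_nat k + 1)%Z with (1 - Z.of_nat k)%Z in e1 by lia.
      replace (- Z.of_nat k - 1)%Z with (- Z.of_nat (S k))%Z in e1 by lia.
      rewrite h1, h2, hb in e1.
      set (x := fst (u (- Z.of_nat (S k))%Z)) in *.
      match type of e1 with ?L = ?R => assert (Hx : x = Cminus L R) by ring end.
      rewrite e1 in Hx. rewrite Hx. ring. }
  destruct Hnz as [n Hn]. apply Hn.
  assert (Ha : fst (u n) = RtoC 0).
  { destruct (Z_le_gt_dec n 0).
    - replace n with (- Z.of_nat (Z.to_nat (- n)))%Z by lia. apply Hneg.
    - replace n with (Z.of_nat (Z.to_nat n)) by lia. rewrite Hpos by lia. reflexivity. }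
  destruct (Hs n) as [_ e2]. assert (hb := b_zero _ _ _ _ _ (HS _) He e2 Ha).
  rewrite (surjective_pairing (u n)), Ha, hb. reflexivity.
Qed.

Lemma scale_sol V z u c : is_solution V z u ->
  is_solution V z (fun n => (Cmult (fst (u n)) c, Cmult (snd (u n)) c)).
Proof.
  intros Hs n. destruct (Hs n) as [e1 e2]. simpl. split.
  - match type of e1 with ?L = ?R =>
      transitivity (Cmult L c); [ring| rewrite e1; ring] end.
  - match type of e2 with ?L = ?R =>
      transitivity (Cmult L c); [ring| rewrite e2; ring] end.
Qed.

Lemma sqnorm_scale v c : sqnorm (Cmult (fst v) c, Cmult (snd v) c) = sqnorm v * Cmod c ^ 2.
Proof. unfold sqnorm. simpl. rewrite !Cmod_mult. ring. Qed.

Lemma normalize V E eps m : (forall n, selfadjoint (V n)) -> 0 < eps -> is_mplus V (E, eps) m ->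
  exists psi, is_solution V (E, eps) psi /\ l2_at_plus_infty psi /\
    fst (psi 0%Z) = RtoC 1 /\ fst (psi 1%Z) = Copp m.
Proof.
  intros HS He [u [Hs [Hnz [Hl Hm]]]].
  assert (H0 := nondeg V E eps u HS He Hs Hnz Hl).
  exists (fun n => (Cmult (fst (u n)) (Cinv (fst (u 0%Z))), Cmult (snd (u n)) (Cinv (fst (u 0%Z))))).
  split; [apply scale_sol; auto|]. split.
  - unfold l2_at_plus_infty in *.
    apply ex_series_ext with (a := fun k => sqnorm (u (Z.of_nat k)) * Cmod (Cinv (fst (u 0%Z))) ^ 2).
    + intros k. symmetry. apply (sqnorm_scale (u (Z.of_nat k))).
    + apply ex_series_scal_r. exact Hl.
  - simpl. split.
    + field. exact H0.
    + rewrite Hm. unfold Cdiv. ring.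
Qed.

Lemma im_bound V E eps psi m : (forall n, selfadjoint (V n)) -> 0 < eps ->
  is_solution V (E, eps) psi -> l2_at_plus_infty psi ->
  fst (psi 0%Z) = RtoC 1 -> fst (psi 1%Z) = Copp m ->
  forall M, eps * rsum1 (fun k => sqnorm (psi (Z.of_nat k))) M <= snd m.
Proof.
  intros HS He Hs Hl H0 H1 M.
  pose proof (green_ineq V E eps psi ltac:(lra) HS Hs Hl M) as G.
  unfold Tg in G. simpl in G. rewrite H0, H1 in G.
  destruct m as [x y]. unfold Cconj, Cmult, Copp, RtoC in G. simpl in G. simpl. lra.
Qed.

Lemma snd_le_Cmod z : snd z <= Cmod z.
Proof.
  apply sq_le_le; [apply Cmod_ge_0|]. rewrite Cmod_sq. pose proof (pow2_ge_0 (fst z)). lra.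
Qed.

Definition cE (V : Z -> M2) (E : R) (n : Z) : C :=
  Cdiv (m21 (V n)) (Cminus (RtoC E) (m22 (V n))).
Definition rr V E (k : nat) : C :=
  Cminus (Cplus (m11 (V (Z.of_nat k))) (Cmult (m12 (V (Z.of_nat k))) (cE V E (Z.of_nat k)))) (RtoC E).
Definition fa (u : Z -> C * C) (k : nat) : C := fst (u (Z.of_nat k)).
Definition gg V E psi (k : nat) : C :=
  match k with O => RtoC 0 | S k' => Cplus (Cplus (fa psi (S k)) (fa psi k')) (Cmult (rr V E k) (fa psi k)) end.
Fixpoint csum0 (f : nat -> C) (n : nat) : C :=
  match n with O => RtoC 0 | S k => Cplus (csum0 f k) (f k) end.

Lemma EmV_ne A E delta : selfadjoint A -> 0 < delta -> delta <= Rabs (E - Re (m22 A)) ->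
  Cminus (RtoC E) (m22 A) <> RtoC 0.
Proof.
  intros _ Hd Hr Heq. apply (f_equal fst) in Heq. unfold Re in Hr. simpl in Heq.
  replace (E - fst (m22 A)) with 0 in Hr by lra. rewrite Rabs_R0 in Hr. lra.
Qed.

Lemma solve_b (V21 V22 E a b : C) : Cminus E V22 <> RtoC 0 ->
  Cplus (Cmult V21 a) (Cmult V22 b) = Cmult E b -> b = Cmult (Cdiv V21 (Cminus E V22)) a.
Proof.
  intros Hn He. transitivity (Cplus b (Cdiv (Cminus (Cplus (Cmult V21 a) (Cmult V22 b)) (Cmult E b)) (Cminus E V22))).
  - rewrite He. field. exact Hn.
  - field. exact Hn.
Qed.

Lemma b_E V E u n : is_solution V (RtoC E) u -> Cminus (RtoC E) (m22 (V n)) <> RtoC 0 ->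
  snd (u n) = Cmult (cE V E n) (fst (u n)).
Proof. intros Hs Hn. destruct (Hs n) as [_ e2]. unfold cE. apply solve_b; auto. Qed.

Lemma recE V E u : is_solution V (RtoC E) u ->
  (forall n, Cminus (RtoC E) (m22 (V n)) <> RtoC 0) ->
  forall k, Cplus (Cplus (fa u (S (S k))) (fa u k)) (Cmult (rr V E (S k)) (fa u (S k))) = RtoC 0.
Proof.
  intros Hs Hn k. destruct (Hs (Z.of_nat (S k))) as [e1 _].
  rewrite (b_E V E u _ Hs (Hn _)) in e1.
  replace (Z.of_nat (S k) + 1)%Z with (Z.of_nat (S (S k))) in e1 by lia.
  replace (Z.of_nat (S k) - 1)%Z with (Z.of_nat k) in e1 by lia.
  unfold fa, rr.
  match type of e1 with ?L = ?R => transitivity (Cminus L R); [ring| rewrite e1; ring] end.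
Qed.

Lemma wronskian V E u1 u2 : is_solution V (RtoC E) u1 -> is_solution V (RtoC E) u2 ->
  (forall n, Cminus (RtoC E) (m22 (V n)) <> RtoC 0) ->
  fst (u1 1%Z) = RtoC 1 -> fst (u1 0%Z) = RtoC 0 ->
  fst (u2 1%Z) = RtoC 0 -> fst (u2 0%Z) = RtoC 1 ->
  forall k, Cminus (Cmult (fa u1 (S k)) (fa u2 k)) (Cmult (fa u2 (S k)) (fa u1 k)) = RtoC 1.
Proof.
  intros H1 H2 Hn a11 a10 a21 a20 k. induction k.
  - unfold fa. simpl. rewrite a11, a10, a21, a20. ring.
  - pose proof (recE V E u1 H1 Hn k) as r1. pose proof (recE V E u2 H2 Hn k) as r2.
    assert (E1 : fa u1 (S (S k)) = Cminus (Copp (fa u1 k)) (Cmult (rr V E (S k)) (fa u1 (S k)))).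
    { match type of r1 with ?L = ?R => transitivity (Cminus (fa u1 (S (S k))) L); [rewrite r1; ring| ring] end. }
    assert (E2 : fa u2 (S (S k)) = Cminus (Copp (fa u2 k)) (Cmult (rr V E (S k)) (fa u2 (S k)))).
    { match type of r2 with ?L = ?R => transitivity (Cminus (fa u2 (S (S k))) L); [rewrite r2; ring| ring] end. }
    rewrite E1, E2. rewrite <- IHk. ring.
Qed.

Lemma variation V E u1 u2 psi m : is_solution V (RtoC E) u1 -> is_solution V (RtoC E) u2 ->
  (forall n, Cminus (RtoC E) (m22 (V n)) <> RtoC 0) ->
  fst (u1 1%Z) = RtoC 1 -> fst (u1 0%Z) = RtoC 0 ->
  fst (u2 1%Z) = RtoC 0 -> fst (u2 0%Z) = RtoC 1 ->
  fst (psi 0%Z) = RtoC 1 -> fst (psi 1%Z) = Copp m ->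
  forall k, Cminus (fa psi k) (Cminus (fa u2 k) (Cmult m (fa u1 k))) =
    Cminus (Cmult (fa u1 k) (csum0 (fun j => Cmult (fa u2 j) (gg V E psi j)) k))
           (Cmult (fa u2 k) (csum0 (fun j => Cmult (fa u1 j) (gg V E psi j)) k)).
Proof.
  intros H1 H2 Hn a11 a10 a21 a20 p0 p1.
  set (f1 := fun j => Cmult (fa u1 j) (gg V E psi j)).
  set (f2 := fun j => Cmult (fa u2 j) (gg V E psi j)).
  assert (HH : forall k,
    Cminus (fa psi k) (Cminus (fa u2 k) (Cmult m (fa u1 k))) =
      Cminus (Cmult (fa u1 k) (csum0 f2 k)) (Cmult (fa u2 k) (csum0 f1 k)) /\
    Cminus (fa psi (S k)) (Cminus (fa u2 (S k)) (Cmult m (fa u1 (S k)))) =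
      Cminus (Cmult (fa u1 (S k)) (csum0 f2 (S k))) (Cmult (fa u2 (S k)) (csum0 f1 (S k)))).
  { induction k.
    - unfold f1, f2, fa. cbn [csum0 gg]. simpl. rewrite a11, a10, a21, a20, p0, p1. split; ring.
    - destruct IHk as [P0 P1]. split; [exact P1|].
      pose proof (recE V E u1 H1 Hn k) as r1. pose proof (recE V E u2 H2 Hn k) as r2.
      pose proof (wronskian V E u1 u2 H1 H2 Hn a11 a10 a21 a20 k) as W.
      assert (E1 : fa u1 (S (S k)) = Cminus (Copp (fa u1 k)) (Cmult (rr V E (S k)) (fa u1 (S k)))).
      { match type of r1 with ?L = ?R => transitivity (Cminus (fa u1 (S (S k))) L); [rewrite r1; ring| ring] end. }
      assert (E2 : fa u2 (S (S k)) = Cminus (Copp (fa u2 k)) (Cmult (rr V E (S k)) (fa u2 (S k)))).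
      { match type of r2 with ?L = ?R => transitivity (Cminus (fa u2 (S (S k))) L); [rewrite r2; ring| ring] end. }
      assert (G : gg V E psi (S k) = Cplus (Cplus (fa psi (S (S k))) (fa psi k)) (Cmult (rr V E (S k)) (fa psi (S k)))) by reflexivity.
      assert (Ep : fa psi (S (S k)) = Cminus (Cminus (gg V E psi (S k)) (fa psi k)) (Cmult (rr V E (S k)) (fa psi (S k)))).
      { rewrite G. ring. }
      cbn [csum0] in *.
      set (g1 := gg V E psi (S k)) in *.
      set (s1 := csum0 f1 k) in *. set (s2 := csum0 f2 k) in *.
      set (x1 := fa u1 k) in *. set (y1 := fa u1 (S k)) in *.
      set (x2 := fa u2 k) in *. set (y2 := fa u2 (S k)) in *.
      set (pk := fa psi k) in *. set (pk1 := fa psi (S k)) in *.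
      set (r := rr V E (S k)) in *.
      assert (Q0 : pk = Cplus (Cminus x2 (Cmult m x1)) (Cminus (Cmult x1 s2) (Cmult x2 s1))) by (rewrite <- P0; ring).
      assert (Q1 : pk1 = Cplus (Cminus y2 (Cmult m y1)) (Cminus (Cmult y1 (Cplus s2 (f2 k))) (Cmult y2 (Cplus s1 (f1 k))))) by (rewrite <- P1; ring).
      rewrite Ep, E1, E2, Q0, Q1. unfold f1, f2. fold x1 x2 y1 y2 g1.
      match goal with |- ?L = ?R =>
        assert (Hf : Cminus L R = Cmult g1 (Cminus (RtoC 1) (Cminus (Cmult y1 x2) (Cmult y2 x1)))) by ring;
        rewrite W in Hf;
        transitivity (Cplus R (Cminus L R)); [ring| rewrite Hf; ring] end. }
  intros k. apply HH.
Qed.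

Lemma g_alg (z E V11 V12 V21 V22 pa pb X : C) : Cminus E V22 <> RtoC 0 ->
  Cplus (Cmult V21 pa) (Cmult V22 pb) = Cmult z pb ->
  Cplus X (Cplus (Cmult V11 pa) (Cmult V12 pb)) = Cmult z pa ->
  Cplus X (Cmult (Cminus (Cplus V11 (Cmult V12 (Cdiv V21 (Cminus E V22)))) E) pa) =
  Cmult (Cminus z E) (Cplus pa (Cmult (Cdiv V12 (Cminus E V22)) pb)).
Proof.
  intros Hn H2 H3.
  assert (HX : X = Cminus (Cmult z pa) (Cplus (Cmult V11 pa) (Cmult V12 pb))) by (rewrite <- H3; ring).
  rewrite HX.
  transitivity (Cplus (Cmult (Cminus z E) (Cplus pa (Cmult (Cdiv V12 (Cminus E V22)) pb)))
     (Cmult (Cdiv V12 (Cminus E V22)) (Cminus (Cplus (Cmult V21 pa) (Cmult V22 pb)) (Cmult z pb)))).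
  - field. exact Hn.
  - rewrite H2. ring.
Qed.

Lemma g_form V E eps psi k : Cminus (RtoC E) (m22 (V (Z.of_nat (S k)))) <> RtoC 0 ->
  is_solution V (E, eps) psi ->
  gg V E psi (S k) = Cmult (Cminus (E, eps) (RtoC E))
    (Cplus (fa psi (S k)) (Cmult (Cdiv (m12 (V (Z.of_nat (S k)))) (Cminus (RtoC E) (m22 (V (Z.of_nat (S k)))))) (snd (psi (Z.of_nat (S k)))))).
Proof.
  intros Hn Hs. destruct (Hs (Z.of_nat (S k))) as [e1 e2].
  replace (Z.of_nat (S k) + 1)%Z with (Z.of_nat (S (S k))) in e1 by lia.
  replace (Z.of_nat (S k) - 1)%Z with (Z.of_nat k) in e1 by lia.
  unfold gg, rr, cE, fa. apply g_alg; auto.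
Qed.

Lemma Cmod_ieps E eps : 0 <= eps -> Cmod (Cminus (E, eps) (RtoC E)) = eps.
Proof.
  intros H. unfold Cmod, Cminus, Cplus, Copp, RtoC. cbn [fst snd].
  replace ((E + - E) ^ 2 + (eps + - 0) ^ 2) with (eps ^ 2) by ring. apply sqrt_pow2. exact H.
Qed.

Lemma cs2 a pa pb k : 0 <= a -> 0 <= pa -> 0 <= pb -> 0 <= k ->
  a * (pa + k * pb) <= sqrt (pa ^ 2 + pb ^ 2) * sqrt (a ^ 2 + (k * a) ^ 2).
Proof.
  intros. apply sq_le_le.
  - apply Rmult_le_pos; apply sqrt_pos.
  - rewrite <- sqrt_mult_alt by nra. rewrite pow2_sqrt.
    + pose proof (pow2_ge_0 (pa * k - pb)). assert (0 <= a^2) by nra. nra.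
    + pose proof (pow2_ge_0 pa). pose proof (pow2_ge_0 pb). pose proof (pow2_ge_0 a). pose proof (pow2_ge_0 (k*a)). nra.
Qed.

Lemma sqnorm_E V E u n : is_solution V (RtoC E) u -> Cminus (RtoC E) (m22 (V n)) <> RtoC 0 ->
  sqnorm (u n) = Cmod (fst (u n)) ^ 2 + (Cmod (cE V E n) * Cmod (fst (u n))) ^ 2.
Proof. intros Hs Hn. unfold sqnorm. rewrite (b_E V E u n Hs Hn), Cmod_mult. reflexivity. Qed.

Lemma F1 V E eps u psi k : (forall n, selfadjoint (V n)) ->
  (forall n, Cminus (RtoC E) (m22 (V n)) <> RtoC 0) -> 0 <= eps ->
  is_solution V (RtoC E) u -> is_solution V (E, eps) psi ->
  Cmod (fa u (S k)) * Cmod (gg V E psi (S k)) <=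
  eps * (sqrt (sqnorm (psi (Z.of_nat (S k)))) * sqrt (sqnorm (u (Z.of_nat (S k))))).
Proof.
  intros HS Hn He Hu Hp.
  rewrite (g_form V E eps psi k (Hn _) Hp), Cmod_mult, Cmod_ieps by auto.
  rewrite (sqnorm_E V E u _ Hu (Hn _)). unfold sqnorm.
  set (n := Z.of_nat (S k)) in *.
  assert (Hk : Cmod (Cdiv (m12 (V n)) (Cminus (RtoC E) (m22 (V n)))) = Cmod (cE V E n)).
  { unfold cE. rewrite !Cmod_div by auto. destruct (HS n) as [_ [_ h21]]. rewrite h21, Cmod_conj. reflexivity. }
  pose proof (Cmod_triangle (fa psi (S k)) (Cmult (Cdiv (m12 (V n)) (Cminus (RtoC E) (m22 (V n)))) (snd (psi n)))) as T.
  rewrite Cmod_mult, Hk in T.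
  pose proof (cs2 (Cmod (fa u (S k))) (Cmod (fst (psi n))) (Cmod (snd (psi n))) (Cmod (cE V E n))
     (Cmod_ge_0 _) (Cmod_ge_0 _) (Cmod_ge_0 _) (Cmod_ge_0 _)) as C2.
  unfold fa in *. fold n in T, C2 |- *.
  pose proof (Cmod_ge_0 (fst (u n))).
  apply Rle_trans with (Cmod (fst (u n)) * (eps * (Cmod (fst (psi n)) + Cmod (cE V E n) * Cmod (snd (psi n))))).
  - apply Rmult_le_compat_l; auto. apply Rmult_le_compat_l; auto.
  - rewrite Rmult_comm, Rmult_assoc. apply Rmult_le_compat_l; auto. rewrite Rmult_comm. exact C2.
Qed.

Lemma rsum1_ext f g N : (forall j, f j = g j) -> rsum1 f N = rsum1 g N.
Proof. intros H; induction N; simpl; [reflexivity| rewrite IHN, H; reflexivity]. Qed.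

Lemma rsum1_scal c f N : rsum1 (fun j => c * f j) N = c * rsum1 f N.
Proof. induction N; simpl; [ring| rewrite IHN; ring]. Qed.

Lemma csum_bound a g : g 0%nat = RtoC 0 -> forall n,
  Cmod (csum0 (fun j => Cmult (a j) (g j)) (S n)) <= rsum1 (fun j => Cmod (a j) * Cmod (g j)) n.
Proof.
  intros g0 n. induction n.
  - cbn [csum0 rsum1]. rewrite g0. replace (Cplus (RtoC 0) (Cmult (a 0%nat) (RtoC 0))) with (RtoC 0) by ring.
    rewrite Cmod_0. lra.
  - change (csum0 (fun j => Cmult (a j) (g j)) (S (S n))) with
      (Cplus (csum0 (fun j => Cmult (a j) (g j)) (S n)) (Cmult (a (S n)) (g (S n)))).
    cbn [rsum1]. eapply Rle_trans; [apply Cmod_triangle|]. rewrite Cmod_mult. lra.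
Qed.

Lemma S_bound V E eps u psi n : (forall n, selfadjoint (V n)) ->
  (forall n, Cminus (RtoC E) (m22 (V n)) <> RtoC 0) -> 0 <= eps ->
  is_solution V (RtoC E) u -> is_solution V (E, eps) psi ->
  Cmod (csum0 (fun j => Cmult (fa u j) (gg V E psi j)) (S n)) <=
  eps * (sqrt (rsum1 (fun k => sqnorm (psi (Z.of_nat k))) n) * sqrt (rsum1 (fun k => sqnorm (u (Z.of_nat k))) n)).
Proof.
  intros HS Hn He Hu Hp.
  eapply Rle_trans; [apply csum_bound; reflexivity|].
  eapply Rle_trans.
  { apply rsum1_le with (g := fun j => eps * (sqrt (sqnorm (psi (Z.of_nat j))) * sqrt (sqnorm (u (Z.of_nat j))))).
    intros j Hj. destruct j; [lia|]. apply F1; auto. }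
  rewrite rsum1_scal. apply Rmult_le_compat_l; auto.
  eapply Rle_trans; [apply rsum1_CS; intros; apply sqrt_pos|].
  rewrite (rsum1_ext (fun j => sqrt (sqnorm (psi (Z.of_nat j))) ^ 2) (fun k => sqnorm (psi (Z.of_nat k)))).
  rewrite (rsum1_ext (fun j => sqrt (sqnorm (u (Z.of_nat j))) ^ 2) (fun k => sqnorm (u (Z.of_nat k)))).
  lra.
  all: intros j; apply pow2_sqrt, sqnorm_nonneg.
Qed.

Lemma psi_kappa V E delta eps psi n : selfadjoint (V n) -> 0 < eps < delta ->
  delta <= Rabs (E - Re (m22 (V n))) -> is_solution V (E, eps) psi ->
  Cmod (fst (psi n)) ^ 2 + (Cmod (cE V E n) * Cmod (fst (psi n))) ^ 2 <= 2 * sqnorm (psi n).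
Proof.
  intros [_ [s22 s21]] He Hd Hp. destruct (Hp n) as [_ e2].
  unfold sqnorm, cE. unfold Re in Hd.
  assert (Hn : Cminus (RtoC E) (m22 (V n)) <> RtoC 0).
  { intros Heq. apply (f_equal fst) in Heq. simpl in Heq.
    replace (E - fst (m22 (V n))) with 0 in Hd by lra. rewrite Rabs_R0 in Hd. lra. }
  rewrite Cmod_div by exact Hn.
  assert (HV : Cmult (m21 (V n)) (fst (psi n)) = Cmult (Cminus (E, eps) (m22 (V n))) (snd (psi n))).
  { match type of e2 with ?L = ?R => transitivity (Cminus L (Cmult (m22 (V n)) (snd (psi n)))); [ring| rewrite e2; ring] end. }
  apply (f_equal Cmod) in HV. rewrite !Cmod_mult in HV.
  assert (Hi : snd (m22 (V n)) = 0).
  { apply (f_equal snd) in s22. simpl in s22. lra. }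
  assert (He2 : Cmod (Cminus (RtoC E) (m22 (V n))) ^ 2 = (E - fst (m22 (V n))) ^ 2).
  { rewrite Cmod_sq. simpl. rewrite Hi. ring. }
  assert (Hz2 : Cmod (Cminus (E, eps) (m22 (V n))) ^ 2 = (E - fst (m22 (V n))) ^ 2 + eps ^ 2).
  { rewrite Cmod_sq. simpl. rewrite Hi. ring. }
  set (e := Cmod (Cminus (RtoC E) (m22 (V n)))) in *.
  set (w := Cmod (Cminus (E, eps) (m22 (V n)))) in *.
  set (c := Cmod (m21 (V n))) in *.
  set (pa := Cmod (fst (psi n))) in *. set (pb := Cmod (snd (psi n))) in *.
  assert (Hdd : delta ^ 2 <= (E - fst (m22 (V n))) ^ 2).
  { rewrite <- (pow2_abs (E - fst (m22 (V n)))). nra. }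
  assert (Hep : 0 < e).
  { unfold e. apply Cmod_gt_0. exact Hn. }
  assert (Hk : (c / e * pa) ^ 2 = w ^ 2 * pb ^ 2 / e ^ 2).
  { replace ((c / e * pa) ^ 2) with ((c * pa) ^ 2 / e ^ 2) by (field; lra).
    rewrite HV. field. lra. }
  rewrite Hk.
  assert (eps ^ 2 <= e ^ 2) by (rewrite He2; nra).
  assert (w ^ 2 * pb ^ 2 / e ^ 2 <= 2 * pb ^ 2).
  { apply Rmult_le_reg_r with (e ^ 2); [nra|]. unfold Rdiv. rewrite Rmult_assoc, Rinv_l by nra.
    rewrite Hz2, <- He2. pose proof (pow2_ge_0 pb). nra. }
  pose proof (pow2_ge_0 pa). lra.
Qed.

Definition phi (u1 u2 : Z -> C * C) (m : C) (n : Z) : C * C :=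
  (Cminus (fst (u2 n)) (Cmult m (fst (u1 n))), Cminus (snd (u2 n)) (Cmult m (snd (u1 n)))).

Lemma pointwise V E delta eps u1 u2 psi m k X1 X2 :
  (forall n, selfadjoint (V n)) -> in_T V delta E -> 0 < eps < delta ->
  (forall n, Cminus (RtoC E) (m22 (V n)) <> RtoC 0) ->
  is_solution V (RtoC E) u1 -> fst (u1 1%Z) = RtoC 1 -> fst (u1 0%Z) = RtoC 0 ->
  is_solution V (RtoC E) u2 -> fst (u2 1%Z) = RtoC 0 -> fst (u2 0%Z) = RtoC 1 ->
  is_solution V (E, eps) psi -> fst (psi 0%Z) = RtoC 1 -> fst (psi 1%Z) = Copp m ->
  Cmod (csum0 (fun j => Cmult (fa u1 j) (gg V E psi j)) (S k)) <= X1 ->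
  Cmod (csum0 (fun j => Cmult (fa u2 j) (gg V E psi j)) (S k)) <= X2 ->
  sqnorm (phi u1 u2 m (Z.of_nat (S k))) <=
    6 * sqnorm (psi (Z.of_nat (S k))) + 3 * X2 ^ 2 * sqnorm (u1 (Z.of_nat (S k)))
    + 3 * X1 ^ 2 * sqnorm (u2 (Z.of_nat (S k))).
Proof.
  intros HS HT He Hn H1 a11 a10 H2 a21 a20 Hp p0 p1 HX1 HX2.
  pose proof (variation V E u1 u2 psi m H1 H2 Hn a11 a10 a21 a20 p0 p1 (S k)) as Var.
  set (S1 := csum0 (fun j => Cmult (fa u1 j) (gg V E psi j)) (S k)) in *.
  set (S2 := csum0 (fun j => Cmult (fa u2 j) (gg V E psi j)) (S k)) in *.
  pose proof (psi_kappa V E delta eps psi (Z.of_nat (S k)) (HS _) He (HT _) Hp) as PK.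
  rewrite (sqnorm_E V E u1 _ H1 (Hn _)), (sqnorm_E V E u2 _ H2 (Hn _)).
  unfold fa in Var.
  set (n := Z.of_nat (S k)) in *.
  assert (Hphi_a : fst (phi u1 u2 m n) = Cminus (fst (psi n)) (Cminus (Cmult (fst (u1 n)) S2) (Cmult (fst (u2 n)) S1))).
  { unfold phi. simpl. rewrite <- Var. ring. }
  assert (Hphi_b : snd (phi u1 u2 m n) = Cmult (cE V E n) (fst (phi u1 u2 m n))).
  { unfold phi. simpl. rewrite (b_E V E u1 n H1 (Hn _)), (b_E V E u2 n H2 (Hn _)). ring. }
  unfold sqnorm. rewrite Hphi_b, Cmod_mult.
  set (A := Cmod (fst (phi u1 u2 m n))).
  assert (HA : A <= Cmod (fst (psi n)) + Cmod (fst (u1 n)) * X2 + Cmod (fst (u2 n)) * X1).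
  { unfold A. rewrite Hphi_a.
    pose proof (Cmod_triangle (fst (psi n)) (Copp (Cminus (Cmult (fst (u1 n)) S2) (Cmult (fst (u2 n)) S1)))) as T1.
    pose proof (Cmod_triangle (Cmult (fst (u1 n)) S2) (Copp (Cmult (fst (u2 n)) S1))) as T2.
    rewrite Cmod_opp in T1, T2. rewrite !Cmod_mult in T2.
    pose proof (Rmult_le_compat_l _ _ _ (Cmod_ge_0 (fst (u1 n))) HX2).
    pose proof (Rmult_le_compat_l _ _ _ (Cmod_ge_0 (fst (u2 n))) HX1).
    unfold Cminus in *. lra. }
  assert (HX1p : 0 <= X1) by (pose proof (Cmod_ge_0 S1); lra).
  assert (HX2p : 0 <= X2) by (pose proof (Cmod_ge_0 S2); lra).
  set (p := Cmod (fst (psi n))) in *. set (t := Cmod (cE V E n)) in *.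
  set (b1 := Cmod (fst (u1 n))) in *. set (b2 := Cmod (fst (u2 n))) in *.
  assert (0 <= A) by apply Cmod_ge_0.
  assert (0 <= p) by apply Cmod_ge_0.
  assert (0 <= b1) by apply Cmod_ge_0. assert (0 <= b2) by apply Cmod_ge_0.
  assert (HA2 : A ^ 2 <= 3 * (p ^ 2 + (b1 * X2) ^ 2 + (b2 * X1) ^ 2)).
  { assert (A ^ 2 <= (p + b1 * X2 + b2 * X1) ^ 2) by (apply pow_incr; lra).
    pose proof (pow2_ge_0 (p - b1 * X2)). pose proof (pow2_ge_0 (p - b2 * X1)).
    pose proof (pow2_ge_0 (b1 * X2 - b2 * X1)). nra. }
  assert (HT2 : (1 + t ^ 2) * A ^ 2 <= (1 + t ^ 2) * (3 * (p ^ 2 + (b1 * X2) ^ 2 + (b2 * X1) ^ 2))).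
  { apply Rmult_le_compat_l; [pose proof (pow2_ge_0 t); lra| exact HA2]. }
  replace (A ^ 2 + (t * A) ^ 2) with ((1 + t ^ 2) * A ^ 2) by ring.
  fold (sqnorm (psi n)) in PK |- *.
  replace (p ^ 2 + (t * p) ^ 2) with ((1 + t ^ 2) * p ^ 2) in PK by ring.
  unfold sqnorm in PK. fold p in PK. lra.
Qed.

Definition WL (F : nat) (th : R) (f : nat -> R) : R := rsum1 f F + th * f (S F).

Lemma WL_le F th f g : 0 <= th -> (forall j, (1 <= j <= S F)%nat -> f j <= g j) -> WL F th f <= WL F th g.
Proof.
  intros Hth H. unfold WL.
  assert (rsum1 f F <= rsum1 g F) by (apply rsum1_le; intros; apply H; lia).
  assert (f (S F) <= g (S F)) by (apply H; lia). nra.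
Qed.

Lemma WL_lin3 F th g1 g2 g3 c1 c2 c3 :
  WL F th (fun j => c1 * g1 j + c2 * g2 j + c3 * g3 j) = c1 * WL F th g1 + c2 * WL F th g2 + c3 * WL F th g3.
Proof. unfold WL. rewrite rsum1_lin3. ring. Qed.

Lemma WL_nonneg F th f : 0 <= th -> (forall j, 0 <= f j) -> 0 <= WL F th f.
Proof. intros. unfold WL. pose proof (rsum1_nonneg f F H0). specialize (H0 (S F)). nra. Qed.

Lemma WL_ge F th f : 0 <= th -> (forall j, 0 <= f j) -> rsum1 f F <= WL F th f.
Proof. intros. unfold WL. specialize (H0 (S F)). nra. Qed.

Lemma WL_le_next F th f : th <= 1 -> (forall j, 0 <= f j) -> WL F th f <= rsum1 f (S F).
Proof. intros. unfold WL. cbn [rsum1]. specialize (H0 (S F)). nra. Qed.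

Lemma normL_WL u L : normL u L =
  sqrt (WL (Defs.nfloor L) (L - INR (Defs.nfloor L)) (fun k => sqnorm (u (Z.of_nat k)))).
Proof. unfold normL, WL. rewrite partial_sq_rsum. reflexivity. Qed.

Lemma theta_bounds L : 1 < L -> 0 <= L - INR (Defs.nfloor L) <= 1.
Proof.
  intros HL. unfold Defs.nfloor. destruct (base_Int_part L) as [h1 h2].
  assert (0 < Int_part L)%Z by (apply lt_IZR; lra).
  rewrite INR_IZR_INZ, Z2Nat.id by lia. lra.
Qed.

Lemma tri_sq x y : Cmod (Cplus x y) ^ 2 <= 2 * Cmod x ^ 2 + 2 * Cmod y ^ 2.
Proof.
  pose proof (Cmod_triangle x y). pose proof (Cmod_ge_0 (Cplus x y)).
  pose proof (Cmod_ge_0 x). pose proof (Cmod_ge_0 y).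
  assert (Cmod (Cplus x y) ^ 2 <= (Cmod x + Cmod y) ^ 2) by (apply pow_incr; lra).
  pose proof (pow2_ge_0 (Cmod x - Cmod y)). nra.
Qed.

Lemma phi_e1 u1 u2 m n : sqnorm (u2 n) <= 2 * sqnorm (phi u1 u2 m n) + 2 * (Cmod m ^ 2 * sqnorm (u1 n)).
Proof.
  unfold sqnorm, phi. cbn [fst snd].
  pose proof (tri_sq (Cminus (fst (u2 n)) (Cmult m (fst (u1 n)))) (Cmult m (fst (u1 n)))) as T1.
  pose proof (tri_sq (Cminus (snd (u2 n)) (Cmult m (snd (u1 n)))) (Cmult m (snd (u1 n)))) as T2.
  replace (Cplus (Cminus (fst (u2 n)) (Cmult m (fst (u1 n)))) (Cmult m (fst (u1 n)))) with (fst (u2 n)) in T1 by ring.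
  replace (Cplus (Cminus (snd (u2 n)) (Cmult m (snd (u1 n)))) (Cmult m (snd (u1 n)))) with (snd (u2 n)) in T2 by ring.
  rewrite !Cmod_mult in T1, T2. rewrite Rpow_mult_distr in T1, T2. lra.
Qed.

Lemma phi_e2 u1 u2 m n : Cmod m ^ 2 * sqnorm (u1 n) <= 2 * sqnorm (phi u1 u2 m n) + 2 * sqnorm (u2 n).
Proof.
  unfold sqnorm, phi. cbn [fst snd].
  pose proof (tri_sq (Copp (Cminus (fst (u2 n)) (Cmult m (fst (u1 n))))) (fst (u2 n))) as T1.
  pose proof (tri_sq (Copp (Cminus (snd (u2 n)) (Cmult m (snd (u1 n))))) (snd (u2 n))) as T2.
  rewrite !Cmod_opp in T1, T2.
  replace (Cplus (Copp (Cminus (fst (u2 n)) (Cmult m (fst (u1 n))))) (fst (u2 n))) with (Cmult m (fst (u1 n))) in T1 by ring.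
  replace (Cplus (Copp (Cminus (snd (u2 n)) (Cmult m (snd (u1 n))))) (snd (u2 n))) with (Cmult m (snd (u1 n))) in T2 by ring.
  rewrite !Cmod_mult in T1, T2. rewrite Rpow_mult_distr in T1, T2. lra.
Qed.

Theorem theorem6p7 (V : Z -> M2) (delta E : R) :
  admissible_pot V -> 0 < delta -> in_T V delta E ->
  forall u1 u2 : Z -> C * C,
    is_solution V (RtoC E) u1 -> fst (u1 1%Z) = RtoC 1 -> fst (u1 0%Z) = RtoC 0 ->
    is_solution V (RtoC E) u2 -> fst (u2 1%Z) = RtoC 0 -> fst (u2 0%Z) = RtoC 1 ->
  exists C1 C2 : R, 0 < C1 /\ C1 < C2 /\
    forall eps : R, 0 < eps < delta ->
    forall m : C, is_mplus V (E, eps) m ->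
    forall L : R, 1 < L -> normL u1 L * normL u2 L = 1 / (4 * eps) ->
      C1 / Cmod m < normL u1 L / normL u2 L /\
      normL u1 L / normL u2 L < C2 / Cmod m.
Proof.
  intros [_ HS] Hd HT u1 u2 H1 a11 a10 H2 a21 a20.
  assert (Hn : forall n, Cminus (RtoC E) (m22 (V n)) <> RtoC 0)
    by (intro n; apply (EmV_ne _ E delta (HS n) Hd (HT n))).
  exists (1/100), 100. split; [lra| split; [lra|]].
  intros eps He m Hm L HL Hprod.
  destruct (normalize V E eps m HS (proj1 He) Hm) as [psi [Hp [Hl [p0 p1]]]].
  rewrite !normL_WL in *.
  pose proof (theta_bounds L HL) as Hth.
  set (F := Defs.nfloor L) in *. set (th := L - INR F) in *.
  set (sq := fun (u : Z -> C * C) k => sqnorm (u (Z.of_nat k))).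
  change (fun k => sqnorm (u1 (Z.of_nat k))) with (sq u1) in *.
  change (fun k => sqnorm (u2 (Z.of_nat k))) with (sq u2) in *.
  assert (sq_nn : forall u j, 0 <= sq u j) by (intros; apply sqnorm_nonneg).
  set (W1 := WL F th (sq u1)) in *. set (W2 := WL F th (sq u2)) in *.
  set (WQ := WL F th (sq psi)). set (WP := WL F th (sq (phi u1 u2 m))).
  assert (W1n : 0 <= W1) by (apply WL_nonneg; auto; lra).
  assert (W2n : 0 <= W2) by (apply WL_nonneg; auto; lra).
  assert (WQn : 0 <= WQ) by (apply WL_nonneg; auto; lra).
  assert (WPn : 0 <= WP) by (apply WL_nonneg; auto; lra).
  set (P1 := sqrt W1) in *. set (P2 := sqrt W2) in *. set (Q := sqrt WQ).
  assert (P1s : P1 * P1 = W1) by (apply sqrt_sqrt; auto).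
  assert (P2s : P2 * P2 = W2) by (apply sqrt_sqrt; auto).
  assert (Qs : Q * Q = WQ) by (apply sqrt_sqrt; auto).
  assert (P1n : 0 <= P1) by apply sqrt_pos. assert (P2n : 0 <= P2) by apply sqrt_pos.
  assert (Qn : 0 <= Q) by apply sqrt_pos.
  assert (Hprod' : P1 * P2 * (4 * eps) = 1) by (rewrite Hprod; field; lra).
  assert (P1p : 0 < P1) by (destruct (Req_dec P1 0) as [e|e]; [rewrite e in Hprod'; lra| lra]).
  assert (P2p : 0 < P2) by (destruct (Req_dec P2 0) as [e|e]; [rewrite e in Hprod'; lra| lra]).
  assert (HQ : eps * WQ <= Cmod m).
  { eapply Rle_trans; [| apply snd_le_Cmod].
    eapply Rle_trans; [| apply (im_bound V E eps psi m HS (proj1 He) Hp Hl p0 p1 (S F))].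
    apply Rmult_le_compat_l; [lra|]. apply WL_le_next; [lra| intros; apply sqnorm_nonneg]. }
  assert (HP : WP <= 6 * WQ + 3 * (eps * (Q * P2)) ^ 2 * W1 + 3 * (eps * (Q * P1)) ^ 2 * W2).
  { unfold WQ, W1, W2. rewrite <- WL_lin3. apply WL_le; [lra|].
    intros j Hj. destruct j as [|k]; [lia|].
    assert (Hk : (k <= F)%nat) by lia.
    assert (Hsq : forall u, sqrt (rsum1 (sq u) k) <= sqrt (WL F th (sq u))).
    { intros u. apply sqrt_le_1_alt. apply Rle_trans with (rsum1 (sq u) F); [apply rsum1_mono; auto|].
      apply WL_ge; auto; lra. }
    unfold sq. apply (pointwise V E delta eps u1 u2 psi m k); auto.
    - eapply Rle_trans; [apply (S_bound V E eps u1 psi k HS Hn ltac:(lra) H1 Hp)|].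
      apply Rmult_le_compat_l; [lra|]. apply Rmult_le_compat; try apply sqrt_pos; apply Hsq.
    - eapply Rle_trans; [apply (S_bound V E eps u2 psi k HS Hn ltac:(lra) H2 Hp)|].
      apply Rmult_le_compat_l; [lra|]. apply Rmult_le_compat; try apply sqrt_pos; apply Hsq. }
  assert (HE1 : W2 <= 2 * WP + 2 * (Cmod m ^ 2 * W1)).
  { unfold W2, WP, W1. 
    replace (2 * WL F th (sq (phi u1 u2 m)) + 2 * (Cmod m ^ 2 * WL F th (sq u1))) with
      (WL F th (fun j => 2 * sq (phi u1 u2 m) j + (2 * Cmod m ^ 2) * sq u1 j + 0 * sq u1 j))
      by (rewrite WL_lin3; ring).
    apply WL_le; [lra|]. intros j _. unfold sq. pose proof (phi_e1 u1 u2 m (Z.of_nat j)). lra. }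
  assert (HE2 : Cmod m ^ 2 * W1 <= 2 * WP + 2 * W2).
  { unfold W2, WP, W1.
    replace (Cmod m ^ 2 * WL F th (sq u1)) with
      (WL F th (fun j => Cmod m ^ 2 * sq u1 j + 0 * sq u1 j + 0 * sq u1 j)) by (rewrite WL_lin3; ring).
    replace (2 * WL F th (sq (phi u1 u2 m)) + 2 * WL F th (sq u2)) with
      (WL F th (fun j => 2 * sq (phi u1 u2 m) j + 2 * sq u2 j + 0 * sq u2 j)) by (rewrite WL_lin3; ring).
    apply WL_le; [lra|]. intros j _. unfold sq. pose proof (phi_e2 u1 u2 m (Z.of_nat j)). lra. }
  clearbody P1 P2 Q W1 W2 WQ WP.
  set (M := Cmod m) in *. assert (Mn : 0 <= M) by apply Cmod_ge_0.
  rewrite <- P1s, <- P2s, <- Qs in *.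
  assert (HP7 : WP <= 7 * (Q * Q)).
  { assert (eps * P1 * P2 = 1/4) by nra. 
    assert (Heq : 3 * (eps * (Q * P2)) ^ 2 * (P1 * P1) + 3 * (eps * (Q * P1)) ^ 2 * (P2 * P2) =
      6 * (Q * Q) * (1/4) ^ 2) by (rewrite <- H; ring).
    pose proof (Rmult_le_pos _ _ Qn Qn). lra. }
  assert (HPM : WP <= 28 * M * P1 * P2).
  { assert (Q * Q <= M / eps).
    { apply Rmult_le_reg_l with eps; [lra|]. replace (eps * (M / eps)) with M by (field; lra). lra. }
    assert (M / eps = 4 * M * P1 * P2).
    { replace (4 * M * P1 * P2) with (M * (P1 * P2 * (4 * eps)) / eps) by (field; lra).
      rewrite Hprod'. field. lra. }
    lra. }
  set (y := M * P1 / P2).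
  assert (Hy : y * P2 = M * P1) by (unfold y; field; lra).
  assert (Hy1 : 1 <= 56 * y + 2 * y ^ 2).
  { apply Rmult_le_reg_r with (P2 * P2); [nra|].
    replace ((56 * y + 2 * y ^ 2) * (P2 * P2)) with (56 * (M * P1) * P2 + 2 * (M * P1) ^ 2) by (rewrite <- Hy; ring).
    lra. }
  assert (Hy2 : y ^ 2 <= 56 * y + 2).
  { apply Rmult_le_reg_r with (P2 * P2); [nra|].
    replace (y ^ 2 * (P2 * P2)) with ((M * P1) ^ 2) by (rewrite <- Hy; ring).
    replace ((56 * y + 2) * (P2 * P2)) with (56 * (M * P1) * P2 + 2 * (P2 * P2)) by (rewrite <- Hy; ring).
    lra. }
  assert (y0 : 0 <= y) by (unfold y; apply Rmult_le_pos; [nra| apply Rlt_le, Rinv_0_lt_compat; lra]).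
  assert (ylo : 1/100 < y) by nra.
  assert (yhi : y < 100) by nra.
  assert (Mp : 0 < M) by (destruct (Req_dec M 0) as [e|e]; [unfold y in ylo; rewrite e in ylo; lra| lra]).
  assert (Hr : P1 / P2 = y / M) by (unfold y; field; lra).
  rewrite Hr. split; apply Rmult_lt_compat_r; try (apply Rinv_0_lt_compat; lra); lra.
Qed.
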